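(* Let $\mu$ be a subadditive capacity on $(\Omega,\mathcal{F})$ which is continuous from above, and let $\{X_n\}_{n\in\mathbb{N}}$, $X$, $Y$, $Z$ be real-valued random variables with $Y\le X_n\le Z$ for all $n$ and with $\int_\Omega Y\, d\mu$ and $\int_\Omega Z\, d\mu$ finite. If $\bar{\mu}(\{\omega:\ \lim_{n\to\infty}X_n(\omega)= X(\omega)\})=1$, then $\lim_{n\to\infty}\int_\Omega X_n\, d\mu=\int_\Omega X\, d\mu$.
   Context: A capacity is $\mu:\mathcal{F}\to[0,1]$ with $\mu(\emptyset)=0$, $\mu(\Omega)=1$, monotone; subadditive if $\mu(A\cup B)\le\mu(A)+\mu(B)$ for disjoint $A,B$; continuous from above if $\mu(A_n)\to\mu(A)$ whenever $A_n\downarrow A$. The conjugate is $\bar{\mu}(A)=1-\mu(A^c)$. Choquet integral: $\int_{\Omega}\xi\, d\mu=\int_{0}^{\infty}\mu(\{\xi\ge t\})\,dt+\int_{-\infty}^0[\mu(\{\xi\ge t\})-1]\,dt$. *)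

(* Defs.v *)
From HB Require Import structures.
From mathcomp Require Import all_boot all_order all_algebra.
From mathcomp Require Import all_classical all_reals all_analysis.
Set Implicit Arguments. Unset Strict Implicit. Unset Printing Implicit Defensive.
Import Order.TTheory GRing.Theory Num.Theory.
Import numFieldNormedType.Exports.
Local Open Scope classical_set_scope.
Local Open Scope ring_scope.

Definition is_capacity d (T : measurableType d) (R : realType) (mu : set T -> R) : Prop :=
  [/\ mu set0 = 0, mu setT = 1,
      (forall A, measurable A -> 0 <= mu A <= 1) &
      (forall A B, measurable A -> measurable B -> A `<=` B -> mu A <= mu B)].

Definition cap_subadditive d (T : measurableType d) (R : realType) (mu : set T -> R) : Prop :=
  forall A B, measurable A -> measurable B -> A `&` B = set0 ->
    mu (A `|` B) <= mu A + mu B.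

Definition cap_cont_from_above d (T : measurableType d) (R : realType) (mu : set T -> R) : Prop :=
  forall A : nat -> set T, (forall n, measurable (A n)) ->
    (forall n, A n.+1 `<=` A n) ->
    mu (A n) @[n --> \oo] --> mu (\bigcap_n A n).

Definition conj_cap d (T : measurableType d) (R : realType) (mu : set T -> R)
  (A : set T) : R := 1 - mu (~` A).

Definition choquet d (T : measurableType d) (R : realType) (mu : set T -> R)
  (xi : T -> R) : \bar R :=
  ((\int[@lebesgue_measure R]_(t in `[0%R, +oo[%classic)
       (mu [set w | t <= xi w])%:E) +
   (\int[@lebesgue_measure R]_(t in `]-oo, 0%R[%classic)
       (mu [set w | t <= xi w] - 1)%:E))%E.

(* Main.v *)
Require Import Defs.
From HB Require Import structures.
From mathcomp Require Import all_boot all_order all_algebra.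
From mathcomp Require Import all_classical all_reals all_analysis.
From mathcomp Require Import measurable_realfun lra.
Import Order.TTheory GRing.Theory Num.Theory.
Import numFieldNormedType.Exports.
Local Open Scope classical_set_scope.
Local Open Scope ring_scope.

Section Exc.
Context {R : realType}.

Definition rc (G : R -> R) (t : R) :=
  forall e, 0 < e -> exists2 r, 0 < r & G t - e < G (t + r).

Lemma exc_countable (G : R -> R) : {homo G : x y / x <= y >-> y <= x} ->
  countable [set t | ~ rc G t].
Proof.
move=> Gni.
pose P t (q : rat) := exists2 e, 0 < e &
  (forall r, 0 < r -> G (t + r) <= G t - e) /\ (G t - e < ratr q < G t).
have key t : ~ rc G t -> exists q, P t q.
  move=> nH.
  case: (pselect (exists e, 0 < e /\ forall r, 0 < r -> G (t + r) <= G t - e))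
    => [[e [e0 he]]|ne]; last first.
    exfalso; apply: nH => e e0.
    case: (pselect (exists2 r, 0 < r & G t - e < G (t + r))) => // hn.
    exfalso; apply: ne; exists e; split => // r r0; rewrite leNgt; apply/negP => lt.
    by apply: hn; exists r.
  have : G t - e < G t by lra.
  move=> /rat_in_itvoo[q]; rewrite in_itv /= => hq.
  by exists q; exists e.
pose qf t : rat := if pselect (exists q, P t q) is left h then sval (cid h) else 0.
have qfP t : ~ rc G t -> P t (qf t).
  move=> nt; rewrite /qf; case: pselect => [h|/(_ (key t nt))//].
  exact: (svalP (cid h)).
have aux a b : ~ rc G a -> ~ rc G b -> a < b -> ratr (qf b) < ratr (qf a) :> R.
  move=> na nb ab.
  have [ea ea0 [hea /andP[qa1 qa2]]] := qfP a na.
  have [eb eb0 [heb /andP[qb1 qb2]]] := qfP b nb.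
  have := hea (b - a) ltac:(by rewrite subr_gt0); rewrite subrKC => h.
  lra.
apply/countable_injP; exists (fun t => pickle (qf t)) => a b.
rewrite !inE => na nb /(pcan_inj pickleK) qab.
case: (ltgtP a b) => // ab.
- by have := aux a b na nb ab; rewrite qab ltxx.
- by have := aux b a nb na ab; rewrite qab ltxx.
Qed.

Lemma exc_null (G : R -> R) : {homo G : x y / x <= y >-> y <= x} ->
  measurable [set t | ~ rc G t] /\ (@lebesgue_measure R) [set t | ~ rc G t] = 0%E.
Proof.
move=> Gni; have c := exc_countable G Gni; split.
  by apply: countable_measurable => // t; exact: measurable_set1.
exact: countable_lebesgue_measure0.
Qed.
End Exc.

Section S.
Context d (T : measurableType d) (R : realType) (mu : set T -> R).
Hypotheses (cap : is_capacity mu) (sub : cap_subadditive mu)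
  (cfa : cap_cont_from_above mu).

Lemma mu_ge0 A : measurable A -> 0 <= mu A.
Proof. by case: cap => _ _ h _ mA; case/andP: (h A mA). Qed.

Lemma mu_le1 A : measurable A -> mu A <= 1.
Proof. by case: cap => _ _ h _ mA; case/andP: (h A mA). Qed.

Lemma mu_le A B : measurable A -> measurable B -> A `<=` B -> mu A <= mu B.
Proof. by case: cap => _ _ _ h; apply: h. Qed.

Lemma mu0 : mu set0 = 0. Proof. by case: cap. Qed.

Lemma mu_split A B : measurable A -> measurable B ->
  mu A <= mu (A `&` B) + mu (A `\` B).
Proof.
move=> mA mB; rewrite -[X in mu X <= _](setUIDK A B); apply: sub; [exact: measurableI|exact: measurableD|].
by apply/seteqP; split => x // [[_ Bx] [_ nBx]].
Qed.

Lemma mge (f : T -> R) t : measurable_fun setT f -> measurable [set w | t <= f w].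
Proof.
move=> mf; have := mf measurableT _ (measurable_itv `[t, +oo[); rewrite setTI.
rewrite (_ : _ @^-1` _ = [set w | t <= f w]) //.
by apply/seteqP; split => w /=; rewrite in_itv /= andbT.
Qed.

Lemma mlt (f : T -> R) r : measurable_fun setT f -> measurable [set w | f w < r].
Proof.
move=> mf; have := mf measurableT _ (measurable_itv `]-oo, r[); rewrite setTI.
by rewrite (_ : _ @^-1` _ = [set w | f w < r]).
Qed.

Lemma mconv (Xs : nat -> T -> R) (X : T -> R) :
  (forall n, measurable_fun setT (Xs n)) -> measurable_fun setT X ->
  measurable [set w | Xs n w @[n --> \oo] --> X w].
Proof.
move=> mXs mX.
rewrite (_ : [set w | _] = \bigcap_k \bigcup_N \bigcap_m
   [set w | `|X w - Xs (N + m)%N w| < k.+1%:R^-1]); last first.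
  apply/seteqP; split => w /=.
    move=> /cvgrPdist_lt h k _.
    have [N _ HN] := h (k.+1%:R^-1) ltac:(by rewrite invr_gt0).
    by exists N => // m _; apply: HN; rewrite /= leq_addr.
  move=> h; apply/cvgrPdist_lt => e e0.
  have [k _ Hk] := near_infty_natSinv_lt (PosNum e0).
  have [N _ HN] := h k I.
  exists N => // n /= Nn.
  have := HN (n - N)%N I; rewrite subnKC // => /lt_le_trans; apply.
  by apply/ltW; apply: Hk => /=.
apply: bigcapT_measurable => k; apply: bigcupT_measurable => N.
apply: bigcapT_measurable => m; apply: mlt.
apply: measurableT_comp => //; exact: measurable_funB.
Qed.

Definition F (f : T -> R) (t : R) := mu [set w | t <= f w].

Lemma ptwise (Xs : nat -> T -> R) (X : T -> R) :
  (forall n, measurable_fun setT (Xs n)) -> measurable_fun setT X ->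
  mu (~` [set w | Xs n w @[n --> \oo] --> X w]) = 0 ->
  forall t, (forall e, 0 < e -> exists2 r, 0 < r & F X t - e < F X (t + r)) ->
  F (Xs n) t @[n --> \oo] --> F X t.
Proof.
move=> mXs mX hN t Hrc.
set C := [set w | _] in hN.
have mC : measurable C by exact: mconv.
have mCc : measurable (~` C) by exact: measurableC.
have mS k : measurable [set w | t <= Xs k w] by exact: mge.
pose U n := \bigcup_k [set w | t <= Xs (n + k)%N w].
have mU n : measurable (U n) by exact: bigcupT_measurable.
have Udec n : U n.+1 `<=` U n.
  by move=> w [k _ h]; exists k.+1 => //; rewrite -addSnnS.
have cU := cfa U mU Udec.
have mUU : measurable (\bigcap_n U n) by exact: bigcapT_measurable.
have LU : mu (\bigcap_n U n) <= F X t.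
  apply: le_trans (mu_split _ _ mUU mC) _.
  have -> : mu (\bigcap_n U n `\` C) = 0.
    apply/eqP; rewrite eq_le mu_ge0 ?andbT; last exact: measurableD.
    by rewrite -hN; apply: mu_le => //; (try exact: measurableD); move=> w [].
  rewrite addr0; apply: mu_le => //; (try exact: measurableI); (try exact: mge).
  move=> w [hU Cw] /=; rewrite leNgt; apply/negP => Xlt.
  have Cw' : Xs n w @[n --> \oo] --> X w := Cw.
  have [N _ HN] := cvgr_lt _ Cw' _ Xlt.
  have [k _ hk] := hU N I.
  by have := HN (N + k)%N (leq_addr _ _); rewrite ltNge hk.
pose V n := \bigcap_k [set w | t <= Xs (n + k)%N w].
have mV n : measurable (V n) by exact: bigcapT_measurable.
apply/cvgrPdist_lt => e e0.
have [r r0 hr] := Hrc (e / 2) ltac:(by rewrite divr_gt0).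
pose A := [set w | t + r <= X w] `&` C.
have mA : measurable A by apply: measurableI => //; exact: mge.
pose W n := A `\` V n.
have mW n : measurable (W n) by exact: measurableD.
have Wdec n : W n.+1 `<=` W n.
  move=> w [Aw nV]; split => // hV; apply: nV => k _ /=.
  by rewrite addSnnS; exact: hV.
have cW := cfa W mW Wdec.
have W0 : \bigcap_n W n = set0.
  apply/seteqP; split => w // hw.
  have [[sX Cw] _] := hw 0%N I.
  have tX : t < X w by apply: lt_le_trans sX; rewrite ltrDl.
  have Cw' : Xs n w @[n --> \oo] --> X w := Cw.
  have [N _ HN] := cvgr_gt _ Cw' _ tX.
  have [_ nV] := hw N I; apply: nV => k _ /=.
  by apply: ltW; apply: HN; rewrite /= leq_addr.
rewrite W0 mu0 in cW.
have LA : F X (t + r) <= mu A.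
  apply: le_trans (mu_split _ _ (mge _ (t + r) mX) mC) _.
  have -> : mu ([set w | t + r <= X w] `\` C) = 0.
    apply/eqP; rewrite eq_le mu_ge0 ?andbT; last by apply: measurableD => //; exact: mge.
    rewrite -hN; apply: mu_le => //; try (by move=> w []).
    by apply: measurableD => //; exact: mge.
  by rewrite addr0.
have H1 := cvgr_lt _ cU ( F X t + e) ltac:(by apply: le_lt_trans LU _; rewrite ltrDl).
have H2 := cvgr_lt _ cW ( e / 2) ltac:(by rewrite divr_gt0).
near=> n.
have u1 : mu (U n) < F X t + e by near: n; exact: H1.
have u2 : mu (W n) < e / 2 by near: n; exact: H2.
have GU : F (Xs n) t <= mu (U n).
  by apply: mu_le => // w h; exists 0%N => //=; rewrite addn0.
have AW : mu A <= F (Xs n) t + mu (W n).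
  apply: le_trans (mu_split _ _ mA (mV n)) _; apply: lerD => //.
  apply: mu_le => //; (try exact: measurableI).
  by move=> w [_ h] /=; have := h 0%N I; rewrite addn0.
rewrite ltr_distlC; apply/andP; split; last by apply: le_lt_trans u1.
lra.
Unshelve. all: by end_near.
Qed.


Lemma F_ni (f : T -> R) : measurable_fun setT f -> {homo F f : x y / x <= y >-> y <= x}.
Proof.
move=> mf x y xy; apply: mu_le; try exact: mge.
by move=> w /= yw; apply: le_trans yw.
Qed.

Lemma F_ge0 (f : T -> R) t : measurable_fun setT f -> 0 <= F f t.
Proof. by move=> mf; apply: mu_ge0; exact: mge. Qed.

Lemma F_le1 (f : T -> R) t : measurable_fun setT f -> F f t <= 1.
Proof. by move=> mf; apply: mu_le1; exact: mge. Qed.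

Lemma F_mono (f g : T -> R) t : measurable_fun setT f -> measurable_fun setT g ->
  (forall w, f w <= g w) -> F f t <= F g t.
Proof.
move=> mf mg fg; apply: mu_le; try exact: mge.
by move=> w /= h; apply: le_trans h _.
Qed.

Lemma mF (f : T -> R) (D : set R) : measurable D -> measurable_fun setT f ->
  measurable_fun D (fun t => (F f t)%:E).
Proof.
move=> mD mf; apply/measurable_EFinP.
by apply: nonincreasing_measurable => //; exact: F_ni.
Qed.

Lemma mF1 (f : T -> R) (D : set R) : measurable D -> measurable_fun setT f ->
  measurable_fun D (fun t => (F f t - 1)%:E).
Proof.
move=> mD mf; apply/measurable_EFinP.
apply: nonincreasing_measurable => // x y xy; rewrite lerB //; exact: F_ni.
Qed.

Section main.
Variables (Xs : nat -> T -> R) (X Y Z : T -> R).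
Hypotheses (mXs : forall n, measurable_fun setT (Xs n))
  (mX : measurable_fun setT X) (mY : measurable_fun setT Y)
  (mZ : measurable_fun setT Z)
  (bnd : forall n w, Y w <= Xs n w /\ Xs n w <= Z w)
  (hN : mu (~` [set w | Xs n w @[n --> \oo] --> X w]) = 0).

Lemma ae_ptwise (D : set R) (f_ : nat -> R -> \bar R) (f : R -> \bar R) :
  (forall t, rc (F X) t -> f_ ^~ t @ \oo --> f t) ->
  {ae (@lebesgue_measure R), forall x, D x -> f_ ^~ x @ \oo --> f x}.
Proof.
move=> H; have [mE E0] := exc_null _ (F_ni _ mX).
exists [set t | ~ rc (F X) t]; split => // t /= nP hrc; apply: nP => _.
exact: H.
Qed.

Local Open Scope ereal_scope.

Lemma pos_cvg :
  (\int[@lebesgue_measure R]_(t in `[0%R, +oo[%classic) (F Z t)%:E) \is a fin_num ->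
  (\int[@lebesgue_measure R]_(t in `[0%R, +oo[%classic) (F X t)%:E) \is a fin_num /\
  (\int[@lebesgue_measure R]_(t in `[0%R, +oo[%classic) (F (Xs n) t)%:E)
    @[n --> \oo] --> \int[@lebesgue_measure R]_(t in `[0%R, +oo[%classic) (F X t)%:E.
Proof.
move=> fZ.
have mD : measurable (`[0%R, +oo[%classic : set R) by exact: measurable_itv.
have Hff : {ae (@lebesgue_measure R), forall x, `[0%R, +oo[%classic x ->
    (fun n => (F (Xs n) x)%:E) @ \oo --> (F X x)%:E}.
  apply: ae_ptwise => t hrc; apply: cvg_EFin; first exact: nearW.
  exact: ptwise.
have Hig : (@lebesgue_measure R).-integrable `[0%R, +oo[%classic (fun t => (F Z t)%:E).
  apply/integrableP; split; first exact: mF.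
  by rewrite integral_fin_num_abs //; apply/measurable_EFinP; exact: mF.
have Hfg : {ae (@lebesgue_measure R), forall x n, `[0%R, +oo[%classic x ->
    `|(F (Xs n) x)%:E| <= (F Z x)%:E}.
  apply: aeW => t n _ /=.
rewrite lee_fin ger0_norm ?F_ge0 //.
  by apply: F_mono => // w; case: (bnd n w).
have [intf _ ?] := @dominated_convergence _ _ _ (@lebesgue_measure R) _ mD
  (fun n t => (F (Xs n) t)%:E) (fun t => (F X t)%:E) (fun t => (F Z t)%:E)
  (fun n => mF _ _ mD (mXs n)) (mF _ _ mD mX) Hff Hig Hfg.
by split => //; exact: integrable_fin_num intf.
Qed.

Lemma neg_cvg :
  (\int[@lebesgue_measure R]_(t in `]-oo, 0%R[%classic) (F Y t - 1)%:E) \is a fin_num ->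
  (\int[@lebesgue_measure R]_(t in `]-oo, 0%R[%classic) (F X t - 1)%:E) \is a fin_num /\
  (\int[@lebesgue_measure R]_(t in `]-oo, 0%R[%classic) (F (Xs n) t - 1)%:E)
    @[n --> \oo] --> \int[@lebesgue_measure R]_(t in `]-oo, 0%R[%classic) (F X t - 1)%:E.
Proof.
move=> fY.
have mD : measurable (`]-oo, 0%R[%classic : set R) by exact: measurable_itv.
have Hff : {ae (@lebesgue_measure R), forall x, `]-oo, 0%R[%classic x ->
    (fun n => (F (Xs n) x - 1)%:E) @ \oo --> (F X x - 1)%:E}.
  apply: ae_ptwise => t hrc; apply: cvg_EFin; first exact: nearW.
  have := cvgB (ptwise _ _ mXs mX hN _ hrc) (cvg_cst (1%R : R)).
  by move=> h; apply: h.
have mg : measurable_fun (`]-oo, 0%R[%classic : set R) (fun t : R => (1 - F Y t)%R).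
  apply: nondecreasing_measurable => // x y xy.
  by rewrite lerD2l lerN2; exact: F_ni.
have Hig : (@lebesgue_measure R).-integrable `]-oo, 0%R[%classic (fun t => (1 - F Y t)%:E).
  apply/integrableP; split; first exact/measurable_EFinP.
  rewrite integral_fin_num_abs //.
  have E : \int[@lebesgue_measure R]_(t in `]-oo, 0%R[%classic) (F Y t - 1)%:E =
      - \int[@lebesgue_measure R]_(t in `]-oo, 0%R[%classic) (1 - F Y t)%:E.
    rewrite -integral_ge0N; last by move=> t _; rewrite lee_fin subr_ge0 F_le1.
    by apply: eq_integral => t _ /=; rewrite opprB.
  by rewrite -fin_numN -E.
have Hfg : {ae (@lebesgue_measure R), forall x n, `]-oo, 0%R[%classic x ->
    `|(F (Xs n) x - 1)%:E| <= (1 - F Y x)%:E}.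
  apply: aeW => t n _ /=.
  rewrite lee_fin ler0_norm ?subr_le0 ?F_le1 // opprB lerD2l lerN2.
  by apply: F_mono => // w; case: (bnd n w).
have [intf _ ?] := @dominated_convergence _ _ _ (@lebesgue_measure R) _ mD
  (fun n t => (F (Xs n) t - 1)%:E) (fun t => (F X t - 1)%:E) (fun t => (1 - F Y t)%:E)
  (fun n => mF1 _ _ mD (mXs n)) (mF1 _ _ mD mX) Hff Hig Hfg.
by split => //; exact: integrable_fin_num intf.
Qed.

End main.


End S.

Theorem lemma3 (d : measure_display) (T : measurableType d) (R : realType)
  (mu : set T -> R) (Xs : nat -> T -> R) (X Y Z : T -> R) :
  is_capacity mu -> cap_subadditive mu -> cap_cont_from_above mu ->
  (forall n, measurable_fun setT (Xs n)) ->
  measurable_fun setT X -> measurable_fun setT Y -> measurable_fun setT Z ->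
  (forall n w, Y w <= Xs n w /\ Xs n w <= Z w) ->
  choquet mu Y \is a fin_num -> choquet mu Z \is a fin_num ->
  conj_cap mu [set w | Xs n w @[n --> \oo] --> X w] = 1 ->
  choquet mu (Xs n) @[n --> \oo] --> choquet mu X.
Proof.
move=> cap sub cfa mXs mX mY mZ bnd fY fZ hconj.
have hN : mu (~` [set w | Xs n w @[n --> \oo] --> X w]) = 0.
  by move: hconj; rewrite /conj_cap => h; lra.
move: fY fZ; rewrite /choquet fin_numD => /andP[_ fYn]; rewrite fin_numD => /andP[fZp _].
have [fp P] := pos_cvg _ _ _ _ cap sub cfa _ _ _ _ mXs mX mZ bnd hN fZp.
have [fn N] := neg_cvg _ _ _ _ cap sub cfa _ _ _ _ mXs mX mY bnd hN fYn.
have := cvgeD (fin_num_adde_defr _ fp) P N.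
by apply.
Qed.
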